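(* For any real continuous function $f\in C(\Omega)$, if $|Kf-f|_\infty\le 1$ then $\|[\mathcal D,\pi(M_f)]\|\le 1$.
   Context: $\Omega=\{0,1\}^{\mathbb N}$ with the shift $\sigma$; for $a\in\{0,1\}$, $ax=(a,x_1,\dots)$. $\mu$ is the measure of maximal entropy (uniform Bernoulli product measure), $L^2(\mu)$ the Hilbert space of square-integrable functions. $|\cdot|_\infty$ is the supremum norm. Ruelle operator $L\phi(x)=\frac12(\phi(0x)+\phi(1x))$; Koopman operator $K\phi=\phi\circ\sigma$. $M_f$ is multiplication $g\mapsto fg$. On $\mathcal H=L^2(\mu)\times L^2(\mu)$ (norm $|(\phi_1,\phi_2)|^2=|\phi_1|^2+|\phi_2|^2$), $\mathcal D=\begin{pmatrix}0&K\\ L&0\end{pmatrix}$, $\pi(A)=\begin{pmatrix}A&0\\0&A\end{pmatrix}$, $[\mathcal D,\pi(A)]=\mathcal D\pi(A)-\pi(A)\mathcal D$; $\|\cdot\|$ is the operator norm. *)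

(* Defs.v *)
From HB Require Import structures.
From mathcomp Require Import all_boot all_order all_algebra.
From mathcomp Require Import all_classical all_reals all_analysis.
Set Implicit Arguments. Unset Strict Implicit. Unset Printing Implicit Defensive.
Import Order.TTheory GRing.Theory Num.Theory.
Import numFieldNormedType.Exports.
Local Open Scope classical_set_scope.
Local Open Scope ring_scope.

(* Omega = {0,1}^N (false = 0, true = 1), with the product topology. *)
Notation Omega := cantor_space.

Definition cylinder (w : seq bool) : set Omega :=
  [set x | forall i, (i < size w)%N -> x i = nth false w i].

Definition cylinders : set (set Omega) := [set cylinder w | w in [set: seq bool]].

Definition OmegaM := g_sigma_algebraType cylinders.

Definition is_uniform_bernoulli (R : realType)
  (mu : {measure set OmegaM -> \bar R}) : Prop :=
  forall w : seq bool, mu (cylinder w) = ((2%:R : R) ^- size w)%:E.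

Definition shift (x : Omega) : Omega := fun n => x n.+1.
Definition pref (a : bool) (x : Omega) : Omega :=
  fun n => if n is m.+1 then x m else a.

Section Ops.
Variable R : realType.

Definition Koop (phi : Omega -> R) : Omega -> R := fun x => phi (shift x).
Definition Ruelle (phi : Omega -> R) : Omega -> R :=
  fun x => 2%:R^-1 * (phi (pref false x) + phi (pref true x)).
Definition Mult (f : Omega -> R) (g : Omega -> R) : Omega -> R := fun x => f x * g x.

(* operators on H = L^2 x L^2, elements represented as pairs of functions *)
Definition Hvec := ((Omega -> R) * (Omega -> R))%type.
Definition Dirac (p : Hvec) : Hvec := (Koop p.2, Ruelle p.1).
Definition piop (A : (Omega -> R) -> (Omega -> R)) (p : Hvec) : Hvec :=
  (A p.1, A p.2).
Definition commut (T S : Hvec -> Hvec) (p : Hvec) : Hvec :=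
  (fun x => (T (S p)).1 x - (S (T p)).1 x,
   fun x => (T (S p)).2 x - (S (T p)).2 x).

Definition supnorm (g : Omega -> R) : \bar R :=
  ereal_sup (range (fun x => (`|g x|)%:E)).

Variable mu : {measure set OmegaM -> \bar R}.

Definition inL2 (phi : Omega -> R) : Prop :=
  measurable_fun [set: OmegaM] (phi : OmegaM -> R) /\
  (\int[mu]_x ((phi x) ^+ 2)%:E < +oo)%E.

Definition Hnorm (p : Hvec) : \bar R :=
  sqrte (\int[mu]_x ((p.1 x) ^+ 2)%:E + \int[mu]_x ((p.2 x) ^+ 2)%:E)%E.

Definition inH (p : Hvec) : Prop := inL2 p.1 /\ inL2 p.2.

Definition opnorm (T : Hvec -> Hvec) : \bar R :=
  ereal_sup [set Hnorm (T p) | p in [set p | inH p /\ (Hnorm p <= 1)%E]].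

End Ops.

(* Main.v *)
Require Import Defs.
From HB Require Import structures.
From mathcomp Require Import all_boot all_order all_algebra.
From mathcomp Require Import all_classical all_reals all_analysis.
Import Order.TTheory GRing.Theory Num.Theory.
Import numFieldNormedType.Exports.
Local Open Scope classical_set_scope.
Local Open Scope ring_scope.
Lemma cylinder_meas w : @measurable _ OmegaM (cylinder w).
Proof. by apply: sub_sigma_algebra; exists w. Qed.

Lemma pref_preimage a w : pref a @^-1` cylinder w =
  match w with [::] => setT | b :: w' => if a == b then cylinder w' else set0 end.
Proof.
case: w => [|b w] /=.
  by apply/seteqP; split => x //= _ i.
apply/seteqP; split => x /=.
  move=> h; have := h 0%N erefl => /= ->; rewrite eqxx => i hi.
  exact: (h i.+1).
case: eqP => [<-|//] h [|i] //= hi; exact: h.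
Qed.

Lemma shift_preimage w : Defs.shift @^-1` cylinder w =
  cylinder (false :: w) `|` cylinder (true :: w).
Proof.
apply/seteqP; split => x /=.
  move=> h; case hx: (x 0%N); [right|left] => -[|i] //= hi; exact: h.
by case=> h i hi; exact: (h i.+1).
Qed.

Lemma measurable_pref a : measurable_fun setT (pref a : OmegaM -> OmegaM).
Proof.
apply: (@measurability _ _ OmegaM OmegaM setT (pref a) cylinders erefl).

move=> _ [B [w _ <-] <-]; rewrite setTI pref_preimage.
case: w => [|b w]; first exact: measurableT.
by case: eqP => _; [exact: cylinder_meas|exact: measurable0].
Qed.

Lemma measurable_shift : measurable_fun setT (Defs.shift : OmegaM -> OmegaM).
Proof.
apply: (@measurability _ _ OmegaM OmegaM setT Defs.shift cylinders erefl).

move=> _ [B [w _ <-] <-]; rewrite setTI shift_preimage.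

by apply: measurableU; exact: cylinder_meas.
Qed.

Lemma cylinder_nil : cylinder [::] = setT.
Proof. by apply/seteqP; split => x //= _ i. Qed.

Definition GG : set (set OmegaM) := [set A | A = set0 \/ cylinders A].

Lemma cyl_inter w v x : (size w <= size v)%N -> cylinder w x -> cylinder v x ->
  cylinder w `&` cylinder v = cylinder v.
Proof.
move=> le hw hv; apply/seteqP; split => y; first by case.
move=> hy; split => // i hi.
rewrite hy; last exact: leq_trans hi le.
by rewrite -hv ?hw //; exact: leq_trans hi le.
Qed.

Lemma GG_setI : setI_closed GG.
Proof.
move=> A B [->|[w _ <-]]; first by left; rewrite set0I.
case=> [->|[v _ <-]]; first by left; rewrite setI0.
have [->|/set0P[x [hw hv]]] := eqVneq (cylinder w `&` cylinder v) set0; first by left.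
right; case: (leqP (size w) (size v)) => h.
  by rewrite (@cyl_inter _ _ _ h hw hv); exists v.
by rewrite setIC (@cyl_inter _ _ _ (ltnW h) hv hw); exists w.
Qed.

Lemma GG_gen : @measurable _ OmegaM = <<s GG >>.
Proof.
apply/seteqP; split.
  apply: smallest_sub; first exact: smallest_sigma_algebra.
  by move=> A hA; apply: sub_sigma_algebra; right.
apply: smallest_sub; first exact: smallest_sigma_algebra.
move=> A [->|hA]; first exact: measurable0.
exact: sub_sigma_algebra.
Qed.
From mathcomp.algebra_tactics Require Import ring lra.
From mathcomp Require Import measurable_realfun.

Lemma half_pow (R : realType) (n : nat) :
  ((2%:R : R) ^- n) = (2%:R : R) ^- n.+1 + (2%:R : R) ^- n.+1.
Proof.
have h : (2%:R : R) ^+ n != 0 by rewrite expf_neq0 // pnatr_eq0.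
by rewrite exprS invfM; field.
Qed.

Section M.
Variable R : realType.
Variable mu : {measure set OmegaM -> \bar R}.
Hypothesis hmu : is_uniform_bernoulli mu.

Definition pfm a := measure_function_pushforward__canonical__measure_function_Measure mu (measurable_pref a).

Lemma muT : mu setT = 1%E.
Proof. by rewrite -cylinder_nil hmu /= expr0 invr1. Qed.

Lemma key (A : set OmegaM) : measurable A ->
  (mu (pref false @^-1` A) + mu (pref true @^-1` A) = mu A + mu A)%E.
Proof.
move=> mA.
have h1 : forall k : nat, GG setT by move=> _; right; exists [::] => //; exact: cylinder_nil.
have h2 : \bigcup_(k in [set: nat]) (setT : set OmegaM) = setT.
  by apply/seteqP; split => x // _; exists 0%N.
have h3 : forall B, GG B -> measure_add (pfm false) (pfm true) B = measure_add mu mu B.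
  move=> B [->|[w _ <-]]; first by rewrite !measure_addE /= /pushforward !preimage_set0 !measure0.
  rewrite !measure_addE /= /pushforward !pref_preimage.
  case: w => [|b w]; first by rewrite cylinder_nil.
  rewrite !hmu /= -!EFinD.
  case: b => /=; first by rewrite measure0 add0e hmu -half_pow.
  by rewrite measure0 adde0 hmu -half_pow.
have h4 : forall k : nat, (measure_add (pfm false) (pfm true) setT < +oo)%E.
  by move=> k; rewrite measure_addE /= /pushforward !preimage_setT muT -EFinD ltry.
have := @measure_unique _ R OmegaM GG (fun _ => setT) GG_gen GG_setI h1 h2
  (measure_add (pfm false) (pfm true)) (measure_add mu mu) h3 h4 A mA.
move=> h; exact: (etrans (esym (measure_addE (pfm false) (pfm true) A)) (etrans h (measure_addE mu mu A))).
Qed.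

Lemma int_key (h : OmegaM -> \bar R) : measurable_fun setT h -> (forall x, (0 <= h x)%E) ->
  (\int[mu]_x h (pref false x) + \int[mu]_x h (pref true x) =
   \int[mu]_x h x + \int[mu]_x h x)%E.
Proof.
move=> mh h0.
have e a : (\int[mu]_x h (pref a x) = \int[pfm a]_x h x)%E.
  rewrite (ge0_integral_pushforward (measurable_pref a) mu measurableT mh).
    by rewrite preimage_setT.
  by move=> y _; exact: h0.
rewrite !e -ge0_integral_measure_add //.
rewrite (eq_measure_integral (measure_add mu mu)).
  by rewrite ge0_integral_measure_add // => x _; exact: h0.
move=> A mA _.
transitivity ((pfm false) A + (pfm true) A)%E; first exact: measure_addE.
transitivity (mu A + mu A)%E; last exact: (esym (measure_addE _ _ _)).
exact: key.
Qed.

Lemma double_inj (c d : \bar R) : (c + c = d + d)%E -> c = d.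
Proof.
case: c => [r| |]; case: d => [s| |] //= [] h.
by congr EFin; lra.
Qed.

Lemma int_shift (h : OmegaM -> \bar R) : measurable_fun setT h -> (forall x, (0 <= h x)%E) ->
  (\int[mu]_x h (Defs.shift x) = \int[mu]_x h x)%E.
Proof.
move=> mh h0; apply/esym/double_inj.
have := int_key (h \o Defs.shift) (measurableT_comp mh measurable_shift) (fun x => h0 _).
by [].
Qed.

Lemma int_L (h : OmegaM -> \bar R) : measurable_fun setT h -> (forall x, (0 <= h x)%E) ->
  (\int[mu]_x ((2^-1 : R)%:E * (h (pref false x) + h (pref true x))) = \int[mu]_x h x)%E.
Proof.
move=> mh h0.
have m0 a : measurable_fun [set: OmegaM] (fun x : OmegaM => h (pref a x)).
  exact: (measurableT_comp mh (measurable_pref a)).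
rewrite (ge0_integralZl mu measurableT (emeasurable_funD (m0 false) (m0 true))); first last.
- by rewrite lee_fin invr_ge0.
- by move=> x _; rewrite adde_ge0.
rewrite (ge0_integralD mu measurableT (fun x _ => h0 _) (m0 false) (fun x _ => h0 _) (m0 true)).
rewrite int_key //.
have : (0 <= \int[mu]_x h x)%E by apply: integral_ge0 => x _.
case: (\int[mu]_x h x)%E => [r| |] // _.
  by rewrite -EFinD -EFinM; congr EFin; field.
by rewrite addye // mulry gtr0_sg ?invr_gt0 // mul1e.
Qed.

Lemma le_int_nm (f g : OmegaM -> \bar R) : (forall x, (0 <= f x)%E) -> (forall x, (f x <= g x)%E) ->
  (\int[mu]_x f x <= \int[mu]_x g x)%E.
Proof.
move=> f0 fg; have g0 x : (0 <= g x)%E by exact: le_trans (f0 x) (fg x).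
rewrite !ge0_integralTE //=.
apply: ge_ereal_sup => _ [s hs <-]; apply: ereal_sup_ubound; exists s => //= x.
exact: le_trans (hs x) (fg x).
Qed.
End M.

Lemma ineq2 (R : realType) (y0 y1 z a0 a1 : R) : `|y0 - z| <= 1 -> `|y1 - z| <= 1 ->
  (2^-1 * (y0 * a0 + y1 * a1) - z * (2^-1 * (a0 + a1))) ^+ 2 <= 2^-1 * (a0 ^+ 2 + a1 ^+ 2).
Proof.
move=> /ler_normlP [h0 h0'] /ler_normlP [h1 h1'].
have -> : 2^-1 * (y0 * a0 + y1 * a1) - z * (2^-1 * (a0 + a1)) =
  2^-1 * ((y0 - z) * a0 + (y1 - z) * a1) by field.
set c0 := y0 - z; set c1 := y1 - z.
have e0 : (c0 * a0) ^+ 2 <= a0 ^+ 2.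
  rewrite exprMn; rewrite -[X in _ <= X]mul1r; apply: ler_wpM2r; first exact: sqr_ge0.
  have q0 : 0 <= (1 - c0) * (1 + c0) by apply: mulr_ge0; rewrite /c0 /c1; lra.
  nra.
have e1 : (c1 * a1) ^+ 2 <= a1 ^+ 2.
  rewrite exprMn; rewrite -[X in _ <= X]mul1r; apply: ler_wpM2r; first exact: sqr_ge0.
  have q0 : 0 <= (1 - c1) * (1 + c1) by apply: mulr_ge0; rewrite /c0 /c1; lra.
  nra.
have : (c0 * a0 + c1 * a1) ^+ 2 <= 2 * ((c0 * a0) ^+ 2 + (c1 * a1) ^+ 2).
  have := sqr_ge0 (c0 * a0 - c1 * a1); nra.
move: e0 e1; set u := c0 * a0; set v := c1 * a1; nra.
Qed.

Theorem corollary2p17 (R : realType) (mu : {measure set OmegaM -> \bar R})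
  (hmu : is_uniform_bernoulli mu) (f : Omega -> R) (hf : continuous f)
  (hKf : (supnorm (fun x : Omega => (Koop f x - f x)%R) <= 1)%E) :
  (opnorm mu (commut (@Dirac R) (piop (Mult f))) <= 1)%E.
Proof.
have hg x : `|Koop f x - f x| <= 1.
  have h1 : ((`|Koop f x - f x|)%:E <= supnorm (fun x => (Koop f x - f x)%R))%E.
    by apply: ereal_sup_ubound; exists x.
  by rewrite -lee_fin (le_trans h1 hKf).
have hga a x : `|f (pref a x) - f x| <= 1.
  by have := hg (pref a x); rewrite distrC.
rewrite /opnorm; apply: ge_ereal_sup => _ [p [[hp1 hp2] hn] <-].
rewrite /Hnorm in hn *; apply: le_trans hn.
rewrite lee_sqrt; last by rewrite adde_ge0 // integral_ge0 // => x _; rewrite lee_fin sqr_ge0.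
rewrite [X in (_ <= X)%E]addeC; apply: leeD.
- have m2 : measurable_fun [set: OmegaM] (fun x : OmegaM => ((p.2 x) ^+ 2)%:E).
    by apply/measurable_EFinP; apply: measurable_funX; case: hp2.
  rewrite -(@int_shift R mu hmu _ m2); last by move=> x; rewrite lee_fin sqr_ge0.
  apply: le_int_nm => x; first by rewrite lee_fin sqr_ge0.
  rewrite lee_fin /commut /Dirac /piop /Mult /Koop /=.
  have := hg x; rewrite /Koop => hx.
  have -> : f (Defs.shift x) * p.2 (Defs.shift x) - f x * p.2 (Defs.shift x) =
    (f (Defs.shift x) - f x) * p.2 (Defs.shift x) by ring.
  rewrite exprMn -[X in _ <= X]mul1r; apply: ler_wpM2r; first exact: sqr_ge0.
  move/ler_normlP: hx => [? ?]; nra.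
- have m1 : measurable_fun [set: OmegaM] (fun x : OmegaM => ((p.1 x) ^+ 2)%:E).
    by apply/measurable_EFinP; apply: measurable_funX; case: hp1.
  rewrite -(@int_L R mu hmu _ m1); last by move=> x; rewrite lee_fin sqr_ge0.
  apply: le_int_nm => x; first by rewrite lee_fin sqr_ge0.
  rewrite -EFinD -EFinM lee_fin /commut /Dirac /piop /Mult /Ruelle /=.
  exact: ineq2.
Qed.
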